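(* Let $G$ be a finitely generated group and $H$ a finitely generated normal subgroup of $G$. Let $\Phi$ be a uniformly continuous action of $G$ on a metric space $\Omega$, and let $U,V\subset\Omega$. If the restricted action $\Phi|_{H}$ (of $H$ on $\Omega$) is topologically Anosov with respect to $(U,V)$, then $\Phi$ is topologically Anosov with respect to $(U,V)$.
   Context: Let $(\Omega,\mathrm{dist})$ be a metric space; $B(\delta,x)=\{y:\mathrm{dist}(x,y)<\delta\}$ and $B(\delta,U)=\bigcup_{x\in U}B(\delta,x)$. An action of a group $G$ is a map $\Phi:G\times\Omega\to\Omega$ such that each $f_g=\Phi(g,\cdot)$ is a homeomorphism of $\Omega$, $\Phi(e,x)=x$, and $\Phi(g_1g_2,x)=\Phi(g_1,\Phi(g_2,x))$. For a finitely generated $G$, the action is uniformly continuous if for some finite symmetric generating set $S$ (symmetric: $s\in S\Rightarrow s^{-1}\in S$) all maps $f_s$, $s\in S$, are uniformly continuous. Fix a finite symmetric generating set $S$ of $G$. For $d>0$, a family $\{y_g\}_{g\in G}\subset\Omega$ is a $d$-pseudotrajectory if $\mathrm{dist}(y_{sg},f_s(y_g))<d$ for all $s\in S$, $g\in G$. A uniformly continuous action has the shadowing property on $V\subset\Omega$ if for every $\varepsilon>0$ there is $d>0$ such that for every $d$-pseudotrajectory $\{y_g\}$ with all $y_g\in V$ there is $x_e\in\Omega$ with $\mathrm{dist}(y_g,f_g(x_e))<\varepsilon$ for all $g\in G$ (this property does not depend on the choice of $S$). The action is expansive on $U\subset\Omega$ if there is $\Delta>0$ such that whenever $x_1,x_2\in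 U$ satisfy $\Phi(g,x_1),\Phi(g,x_2)\in U$ and $\mathrm{dist}(\Phi(g,x_1),\Phi(g,x_2))<\Delta$ for all $g\in G$, then $x_1=x_2$. The action is topologically Anosov with respect to $(U,V)$ if (TA1) there is $\gamma>0$ with $B(\gamma,V)\subset U$, (TA2) it has the shadowing property on $V$, and (TA3) it is expansive on $U$. *)

(* Defs.v *)
From Stdlib Require Import Reals List.
Open Scope R_scope.

Definition is_group {G : Type} (mul : G -> G -> G) (inv : G -> G) (e : G) : Prop :=
  (forall a b c, mul a (mul b c) = mul (mul a b) c) /\
  (forall a, mul e a = a) /\ (forall a, mul a e = a) /\
  (forall a, mul (inv a) a = e) /\ (forall a, mul a (inv a) = e).

Definition is_subgroup {G : Type} (mul : G -> G -> G) (inv : G -> G) (e : G)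
  (K : G -> Prop) : Prop :=
  K e /\ (forall a b, K a -> K b -> K (mul a b)) /\ (forall a, K a -> K (inv a)).

Definition is_normal {G : Type} (mul : G -> G -> G) (inv : G -> G) (e : G)
  (K : G -> Prop) : Prop :=
  is_subgroup mul inv e K /\ forall g h, K h -> K (mul (mul g h) (inv g)).

Inductive gen {G : Type} (mul : G -> G -> G) (inv : G -> G) (e : G) (S : list G)
  : G -> Prop :=
| gen_e : gen mul inv e S e
| gen_s : forall s, In s S -> gen mul inv e S s
| gen_mul : forall a b, gen mul inv e S a -> gen mul inv e S b -> gen mul inv e S (mul a b)
| gen_inv : forall a, gen mul inv e S a -> gen mul inv e S (inv a).

Definition fin_sym_gen_set {G : Type} (mul : G -> G -> G) (inv : G -> G) (e : G)
  (K : G -> Prop) (S : list G) : Prop :=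
  (forall s, In s S -> K s) /\
  (forall s, In s S -> In (inv s) S) /\
  (forall g, K g -> gen mul inv e S g).

Definition finitely_generated {G : Type} (mul : G -> G -> G) (inv : G -> G) (e : G)
  (K : G -> Prop) : Prop :=
  exists S : list G, fin_sym_gen_set mul inv e K S.

Definition is_metric {X : Type} (dist : X -> X -> R) : Prop :=
  (forall x y, 0 <= dist x y) /\
  (forall x y, dist x y = 0 <-> x = y) /\
  (forall x y, dist x y = dist y x) /\
  (forall x y z, dist x z <= dist x y + dist y z).

Definition mcontinuous {X : Type} (dist : X -> X -> R) (f : X -> X) : Prop :=
  forall x eps, 0 < eps -> exists delta, 0 < delta /\
    forall y, dist x y < delta -> dist (f x) (f y) < eps.

Definition unif_continuous {X : Type} (dist : X -> X -> R) (f : X -> X) : Prop :=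
  forall eps, 0 < eps -> exists delta, 0 < delta /\
    forall x y, dist x y < delta -> dist (f x) (f y) < eps.

Definition homeomorphism {X : Type} (dist : X -> X -> R) (f : X -> X) : Prop :=
  mcontinuous dist f /\ exists h : X -> X, mcontinuous dist h /\
    (forall x, h (f x) = x) /\ (forall x, f (h x) = x).

Definition ball_set {X : Type} (dist : X -> X -> R) (delta : R) (U : X -> Prop) : X -> Prop :=
  fun y => exists x, U x /\ dist x y < delta.

(* ---------- actions, restricted to a subgroup K (K = fun _ => True for G) ---------- *)
Definition is_action {G X : Type} (mul : G -> G -> G) (e : G) (dist : X -> X -> R)
  (K : G -> Prop) (Phi : G -> X -> X) : Prop :=
  (forall g, K g -> homeomorphism dist (Phi g)) /\
  (forall x, Phi e x = x) /\
  (forall g1 g2 x, K g1 -> K g2 -> Phi (mul g1 g2) x = Phi g1 (Phi g2 x)).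

Definition unif_cont_action {G X : Type} (mul : G -> G -> G) (inv : G -> G) (e : G)
  (dist : X -> X -> R) (K : G -> Prop) (Phi : G -> X -> X) : Prop :=
  exists S, fin_sym_gen_set mul inv e K S /\
    forall s, In s S -> unif_continuous dist (Phi s).

Definition pseudotraj {G X : Type} (mul : G -> G -> G) (dist : X -> X -> R)
  (K : G -> Prop) (S : list G) (Phi : G -> X -> X) (d : R) (y : G -> X) : Prop :=
  forall s g, In s S -> K g -> dist (y (mul s g)) (Phi s (y g)) < d.

Definition shadowing_on {G X : Type} (mul : G -> G -> G) (dist : X -> X -> R)
  (K : G -> Prop) (S : list G) (Phi : G -> X -> X) (V : X -> Prop) : Prop :=
  forall eps, 0 < eps -> exists d, 0 < d /\
    forall y : G -> X, pseudotraj mul dist K S Phi d y ->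
      (forall g, K g -> V (y g)) ->
      exists x_e : X, forall g, K g -> dist (y g) (Phi g x_e) < eps.

Definition expansive_on {G X : Type} (dist : X -> X -> R)
  (K : G -> Prop) (Phi : G -> X -> X) (U : X -> Prop) : Prop :=
  exists Delta, 0 < Delta /\
    forall x1 x2, U x1 -> U x2 ->
      (forall g, K g -> U (Phi g x1) /\ U (Phi g x2) /\ dist (Phi g x1) (Phi g x2) < Delta) ->
      x1 = x2.

Definition top_anosov {G X : Type} (mul : G -> G -> G) (dist : X -> X -> R)
  (K : G -> Prop) (S : list G) (Phi : G -> X -> X) (U V : X -> Prop) : Prop :=
  (exists gamma, 0 < gamma /\ forall x, ball_set dist gamma V x -> U x) /\
  shadowing_on mul dist K S Phi V /\
  expansive_on dist K Phi U.

(* Main.v *)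
Require Import Defs.
From Stdlib Require Import Reals List Lra.
Open Scope R_scope.

Section Aux.
Variables (G : Type) (mul : G -> G -> G) (inv : G -> G) (e : G).
Hypothesis hG : is_group mul inv e.
Variables (X : Type) (dist : X -> X -> R).
Hypothesis hX : is_metric dist.
Variable Phi : G -> X -> X.
Hypothesis hact : forall g1 g2 x, Phi (mul g1 g2) x = Phi g1 (Phi g2 x).
Hypothesis hPe : forall x, Phi e x = x.

Lemma assoc a b c : mul a (mul b c) = mul (mul a b) c.
Proof. destruct hG as [h _]; apply h. Qed.
Lemma mule a : mul e a = a.
Proof. destruct hG as [_ [h _]]; apply h. Qed.
Lemma mulre a : mul a e = a.
Proof. destruct hG as [_ [_ [h _]]]; apply h. Qed.
Lemma linv a : mul (inv a) a = e.
Proof. destruct hG as [_ [_ [_ [h _]]]]; apply h. Qed.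
Lemma rinv a : mul a (inv a) = e.
Proof. destruct hG as [_ [_ [_ [_ h]]]]; apply h. Qed.

Lemma inv_uniq x y : mul x y = e -> x = inv y.
Proof.
  intro H. rewrite <- (mulre x), <- (rinv y), assoc, H, mule. reflexivity.
Qed.
Lemma inv_inv a : inv (inv a) = a.
Proof. symmetry. apply inv_uniq. apply rinv. Qed.
Lemma inv_e : inv e = e.
Proof. symmetry; apply inv_uniq. apply mule. Qed.
Lemma inv_mul a b : inv (mul a b) = mul (inv b) (inv a).
Proof.
  symmetry; apply inv_uniq.
  rewrite <- assoc, (assoc (inv a)), linv, mule, linv. reflexivity.
Qed.

Lemma d0 x : dist x x = 0.
Proof. destruct hX as [_ [h _]]. apply h; reflexivity. Qed.
Lemma dsym x y : dist x y = dist y x.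
Proof. destruct hX as [_ [_ [h _]]]. apply h. Qed.
Lemma dtri x y z : dist x z <= dist x y + dist y z.
Proof. destruct hX as [_ [_ [_ h]]]. apply h. Qed.

Lemma uc_ext (f g : X -> X) : unif_continuous dist f -> (forall x, g x = f x) ->
  unif_continuous dist g.
Proof.
  intros hf hg eps he. destruct (hf eps he) as [d [hd H]]. exists d; split; auto.
  intros x y hxy. rewrite !hg; auto.
Qed.

Lemma uc_comp (f g : X -> X) : unif_continuous dist f -> unif_continuous dist g ->
  unif_continuous dist (fun x => f (g x)).
Proof.
  intros hf hg eps he. destruct (hf eps he) as [d [hd H]].
  destruct (hg d hd) as [d' [hd' H']]. exists d'; split; auto.
Qed.

Lemma uc_all S : (forall s, In s S -> In (inv s) S) ->
  (forall s, In s S -> unif_continuous dist (Phi s)) ->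
  forall g, gen mul inv e S g ->
  unif_continuous dist (Phi g) /\ unif_continuous dist (Phi (inv g)).
Proof.
  intros Hsym Huc g Hg. induction Hg.
  - assert (Hid : unif_continuous dist (fun x => x)).
    { intros eps he; exists eps; split; auto. }
    rewrite inv_e. split; apply (uc_ext _ _ Hid); intros; apply hPe.
  - split; auto.
  - destruct IHHg1, IHHg2. split.
    + eapply uc_ext. apply (uc_comp _ _ H H1). intros; apply hact.
    + eapply uc_ext. apply (uc_comp _ _ H2 H0). intros; rewrite inv_mul; apply hact.
  - destruct IHHg. rewrite inv_inv. split; auto.
Qed.

Definition pt (S : list G) d (y : G -> X) :=
  pseudotraj mul dist (fun _ => True) S Phi d y.

Lemma pt_mono S d d' y : d' <= d -> pt S d' y -> pt S d y.
Proof. intros hd H s g hs hg. specialize (H s g hs hg). lra. Qed.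

Lemma ptP S : (forall g, unif_continuous dist (Phi g)) ->
  forall g, gen mul inv e S g -> forall eta, 0 < eta -> exists del, 0 < del /\
   forall y, pt S del y -> forall k, dist (y (mul g k)) (Phi g (y k)) < eta.
Proof.
  intros Huc g Hg. induction Hg; intros eta heta.
  - exists 1; split; [lra|]. intros y _ k. rewrite mule, hPe, d0; auto.
  - exists eta; split; [auto|]. intros y hy k. apply hy; auto.
  - destruct (Huc a (eta/2)) as [d' [hd' Hd']]; [lra|].
    destruct (IHHg1 (eta/2)) as [da [hda Ha]]; [lra|].
    destruct (IHHg2 d' hd') as [db [hdb Hb]].
    exists (Rmin da db); split; [apply Rmin_glb_lt; auto|].
    intros y hy k.
    assert (h1 := Ha y (pt_mono _ _ _ _ (Rmin_l _ _) hy) (mul b k)).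
    assert (h2 := Hd' _ _ (Hb y (pt_mono _ _ _ _ (Rmin_r _ _) hy) k)).
    rewrite <- assoc, hact.
    eapply Rle_lt_trans. apply dtri with (y := Phi a (y (mul b k))). lra.
  - destruct (Huc (inv a) eta heta) as [d' [hd' Hd']].
    destruct (IHHg d' hd') as [da [hda Ha]].
    exists da; split; auto. intros y hy k.
    assert (h1 := Ha y hy (mul (inv a) k)).
    rewrite assoc, rinv, mule in h1. rewrite dsym in h1.
    assert (h2 := Hd' _ _ h1). rewrite <- hact, linv, hPe in h2.
    exact h2.
Qed.

End Aux.

Lemma list_min (A : Type) (P : A -> R -> Prop) (l : list A) :
  (forall a d d', 0 < d' -> d' <= d -> P a d -> P a d') ->
  (forall a, In a l -> exists d, 0 < d /\ P a d) ->
  exists d, 0 < d /\ forall a, In a l -> P a d.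
Proof.
  intros Hm. induction l as [|a l IH]; intros H.
  - exists 1; split; [lra|]. intros a [].
  - destruct (H a (or_introl eq_refl)) as [da [hda Pa]].
    destruct IH as [dl [hdl Pl]]. { intros b hb; apply H; right; auto. }
    exists (Rmin da dl); split; [apply Rmin_glb_lt; auto|].
    intros b [<-|hb].
    + eapply Hm; [apply Rmin_glb_lt; auto | apply Rmin_l | auto].
    + eapply Hm; [apply Rmin_glb_lt; auto | apply Rmin_r | auto].
Qed.

Theorem lemma1
  (G : Type) (mul : G -> G -> G) (inv : G -> G) (e : G)
  (hG : is_group mul inv e)
  (H : G -> Prop) (hH : is_normal mul inv e H)
  (X : Type) (dist : X -> X -> R) (hX : is_metric dist)
  (Phi : G -> X -> X)
  (hPhi : is_action mul e dist (fun _ => True) Phi)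
  (hunif : unif_cont_action mul inv e dist (fun _ => True) Phi)
  (SG : list G) (hSG : fin_sym_gen_set mul inv e (fun _ => True) SG)
  (SH : list G) (hSH : fin_sym_gen_set mul inv e H SH)
  (U V : X -> Prop)
  (hTA : top_anosov mul dist H SH Phi U V) :
  top_anosov mul dist (fun _ => True) SG Phi U V.
Proof.
  destruct hTA as [[gamma [hgam hball]] [hsh [Delta [hD hexp]]]].
  destruct hPhi as [_ [hPe hact0]].
  assert (hact : forall g1 g2 x, Phi (mul g1 g2) x = Phi g1 (Phi g2 x))
    by (intros; apply hact0; trivial).
  destruct hH as [[He [Hmul Hinv]] Hnorm].
  split; [exists gamma; split; auto|]. split.
  2:{ exists Delta; split; [auto|]. intros x1 x2 U1 U2 Hall.
      apply hexp; auto. }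
  intros eps heps.
  set (eps1 := Rmin eps (Rmin gamma (Delta/3))).
  assert (he1 : 0 < eps1) by (unfold eps1; repeat apply Rmin_glb_lt; lra).
  assert (he1a : eps1 <= eps) by apply Rmin_l.
  assert (he1b : eps1 <= gamma)
    by (eapply Rle_trans; [apply Rmin_r| apply Rmin_l]).
  assert (he1c : eps1 <= Delta/3)
    by (eapply Rle_trans; [apply Rmin_r| apply Rmin_r]).
  assert (Huc : forall g, unif_continuous dist (Phi g)).
  { destruct hunif as [S [[_ [Ssym Sgen]] Suc]]. intro g.
    apply (uc_all G mul inv e hG X dist Phi hact hPe S Ssym Suc g (Sgen g I)). }
  destruct (list_min G (fun s d => forall a b, dist a b < d ->
      dist (Phi s a) (Phi s b) < eps1/2) SG) as [s0 [hs0 Hs0]].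
  { intros a d d' _ hd Hp x y hxy. apply Hp; lra. }
  { intros a _. destruct (Huc a (eps1/2)) as [d [hd Hd]]; [lra|]. exists d; auto. }
  set (sig := Rmin eps1 s0).
  assert (hsig : 0 < sig) by (apply Rmin_glb_lt; auto).
  assert (hsig1 : sig <= eps1) by apply Rmin_l.
  assert (hsig2 : sig <= s0) by apply Rmin_r.
  destruct (hsh sig hsig) as [dH [hdH HdH]].
  destruct (list_min G (fun t d => forall y, pt G mul X dist Phi SG d y ->
      forall k, dist (y (mul t k)) (Phi t (y k)) < dH) SH) as [dd [hdd Hdd]].
  { intros a d d' _ hd Hp y hy. apply Hp. eapply pt_mono; eauto. }
  { intros t ht. destruct hSG as [_ [_ hgen]].
    apply (ptP G mul inv e hG X dist hX Phi hact hPe SG Huc t (hgen t I) dH hdH). }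
  exists (Rmin (eps1/2) dd); split; [apply Rmin_glb_lt; lra|].
  intros y hy hV.
  assert (hy1 : pt G mul X dist Phi SG dd y) by (eapply pt_mono; [apply Rmin_r|exact hy]).
  assert (hy2 : pt G mul X dist Phi SG (eps1/2) y) by (eapply pt_mono; [apply Rmin_l|exact hy]).
  set (Sh := fun k w => forall h, H h -> dist (y (mul h k)) (Phi h w) < sig).
  assert (Hex : forall k, exists w, Sh k w).
  { intro k. apply (HdH (fun h => y (mul h k))).
    - intros t h Ht Hh. simpl. rewrite <- (assoc G mul inv e hG).
      apply (Hdd t Ht y hy1).
    - intros; apply hV; trivial. }
  assert (Kgen : forall w1 w2 k,
     (forall h, H h -> dist (y (mul h k)) (Phi h w1) < eps1) -> Sh k w2 -> w1 = w2).
  { intros w1 w2 k H1 H2.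
    assert (U1 : forall h, H h -> U (Phi h w1)).
    { intros h hh. apply hball. exists (y (mul h k)); split; [apply hV; trivial|].
      specialize (H1 h hh); lra. }
    assert (U2 : forall h, H h -> U (Phi h w2)).
    { intros h hh. apply hball. exists (y (mul h k)); split; [apply hV; trivial|].
      specialize (H2 h hh); lra. }
    apply hexp.
    - rewrite <- hPe; auto.
    - rewrite <- hPe; auto.
    - intros h hh. split; [auto|split; [auto|]].
      specialize (H1 h hh). specialize (H2 h hh).
      eapply Rle_lt_trans. apply (dtri X dist hX) with (y := y (mul h k)).
      rewrite (dsym X dist hX (Phi h w1)). lra. }
  assert (K : forall s k w w', In s SG -> Sh k w -> Sh (mul s k) w' -> w' = Phi s w).
  { intros s k w w' hs H1 H2. symmetry. apply (Kgen _ _ (mul s k)); auto.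
    intros h hh.
    set (h' := mul (mul (inv s) h) s).
    assert (hh' : H h').
    { unfold h'. rewrite <- (inv_inv G mul inv e hG s) at 2. apply Hnorm; auto. }
    assert (eq1 : mul s h' = mul h s).
    { unfold h'. rewrite !(assoc G mul inv e hG), (rinv G mul inv e hG), (mule G mul inv e hG).
      reflexivity. }
    assert (eq2 : mul h (mul s k) = mul s (mul h' k)).
    { rewrite !(assoc G mul inv e hG), eq1. reflexivity. }
    assert (eq3 : Phi h (Phi s w) = Phi s (Phi h' w)).
    { rewrite <- !hact, eq1. reflexivity. }
    rewrite eq2, eq3.
    assert (a1 := hy2 s (mul h' k) hs I).
    assert (a2 := Hs0 s hs _ _ (Rlt_le_trans _ _ _ (H1 h' hh') hsig2)).
    eapply Rle_lt_trans. apply (dtri X dist hX) with (y := Phi s (y (mul h' k))). lra. }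
  assert (Q : forall g, gen mul inv e SG g ->
     forall k w w', Sh k w -> Sh (mul g k) w' -> w' = Phi g w).
  { intros g Hg. induction Hg; intros k w w' H1 H2.
    - rewrite hPe. rewrite (mule G mul inv e hG) in H2. symmetry.
      apply (Kgen _ _ k); auto. intros h hh; specialize (H1 h hh); lra.
    - apply (K s k); auto.
    - destruct (Hex (mul b k)) as [w'' H3].
      rewrite hact. rewrite <- (IHHg2 k w w'' H1 H3).
      apply (IHHg1 (mul b k)); auto. rewrite (assoc G mul inv e hG); auto.
    - assert (E : w = Phi a w').
      { apply (IHHg (mul (inv a) k)); auto.
        rewrite (assoc G mul inv e hG), (rinv G mul inv e hG), (mule G mul inv e hG); auto. }
      rewrite E, <- hact, (linv G mul inv e hG), hPe. reflexivity. }
  destruct (Hex e) as [xe Hxe]. exists xe. intros g _.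
  destruct (Hex g) as [w Hw].
  destruct hSG as [_ [_ hgen]].
  assert (E := Q g (hgen g I) e xe w Hxe).
  rewrite (mulre G mul inv e hG) in E. rewrite <- E by auto.
  specialize (Hw e He). rewrite (mule G mul inv e hG), hPe in Hw. lra.
Qed.
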